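(* For any $\nu,\nu'\in\mathcal{M}(\mathbb{S}^{d-1})$ with Jordan decompositions $\nu=\nu_+-\nu_-$, $\nu'=\nu'_+-\nu'_-$, $$\sup_{x\in\mathbb{S}^{d-1}}|f(x;\nu)-f(x;\nu')|\le2\sqrt2\max\{\widetilde W_2(\nu_+,\nu'_+),\ \widetilde W_2(\nu_-,\nu'_-)\}.$$
   Context: $\sigma(u)=\max\{u,0\}$, $f(x;\nu)=\int_{\mathbb{S}^{d-1}}\sigma(\langle\theta,x\rangle)d\nu(\theta)$. On $\mathbb{R}_+\times\mathbb{S}^{d-1}$ use the cone metric $\widetilde{\mathrm{dist}}((r_1,\theta_1),(r_2,\theta_2))^2=(r_1-r_2)^2+2r_1r_2(1-\langle\theta_1,\theta_2\rangle)$, and let $W_2$ be the 2-Wasserstein distance w.r.t. it on $\mathcal{P}_2(\mathbb{R}_+\times\mathbb{S}^{d-1})$. The homogeneous projection $\mathsf h\mu\in\mathcal{M}_+(\mathbb{S}^{d-1})$ of $\mu$ is defined by $\int\phi\,d(\mathsf h\mu)=\int r\phi(\theta)\,d\mu(r,\theta)$ for continuous $\phi$. For nonnegative measures $\nu_1,\nu_2$: $\widetilde W_2(\nu_1,\nu_2)=\inf\{W_2(\mu_1,\mu_2):\mu_1,\mu_2\in\mathcal{P}_2(\mathbb{R}_+\times\mathbb{S}^{d-1}),\ \mathsf h\mu_1=\nu_1,\ \mathsf h\mu_2=\nu_2\}$. *)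

(* Defs.v *)
From HB Require Import structures.
From mathcomp Require Import all_boot all_order all_algebra.
From mathcomp Require Import all_classical all_reals all_analysis.
Set Implicit Arguments. Unset Strict Implicit. Unset Printing Implicit Defensive.
Import Order.TTheory GRing.Theory Num.Theory.
Import numFieldNormedType.Exports.
Local Open Scope classical_set_scope.
Local Open Scope ring_scope.

Section Defs.
Variables (R : realType) (d : nat).

Definition Rd := g_sigma_algebraType (@open 'rV[R]_d).

Definition inner (x y : 'rV[R]_d) : R := \sum_(i < d) x 0 i * y 0 i.

Definition usphere : set Rd := [set x | inner x x = 1].

Definition relu (u : R) : R := Num.max u 0.

(* Measures on S^{d-1} are represented as measures on the Borel sets of
   R^d that are concentrated on the usphere. *)
Definition on_sphere (nu : {measure set Rd -> \bar R}) : Prop :=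
  nu (~` usphere) = 0%E.

Definition charge_on_sphere (nu : {charge set Rd -> \bar R}) : Prop :=
  forall A, measurable A -> A `<=` ~` usphere -> nu A = 0%E.

Definition is_jordan_decomp (nu : {charge set Rd -> \bar R})
    (nup num : {measure set Rd -> \bar R}) : Prop :=
  (forall A, measurable A -> nu A = (nup A - num A)%E) /\
  exists P, [/\ measurable P, nup (~` P) = 0%E & num P = 0%E].

(* f(x; nu) = \int sigma(<theta, x>) d nu(theta)
            = \int sigma(<theta,x>) d nu_+ - \int sigma(<theta,x>) d nu_-
   where (nu_+, nu_-) is the Jordan decomposition of nu. *)
Definition fnet (x : Rd) (nup num : {measure set Rd -> \bar R}) : \bar R :=
  (\int[nup]_th (relu (inner th x))%:E - \int[num]_th (relu (inner th x))%:E)%E.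

Definition cone : set (R * Rd)%type := [set p | 0 <= p.1 /\ usphere p.2].

Definition cone_dist2 (p q : R * Rd) : R :=
  (p.1 - q.1) ^+ 2 + 2 * p.1 * q.1 * (1 - inner p.2 q.2).

(* P_2(R_+ x S^{d-1}): probability measures concentrated on the cone with
   finite second moment (the cone distance to the apex is r). *)
Definition P2 (mu : probability (R * Rd)%type R) : Prop :=
  mu (~` cone) = 0%E /\ (\int[mu]_p ((p.1) ^+ 2)%:E < +oo)%E.

Definition coupling (mu1 mu2 : probability (R * Rd)%type R)
    (g : probability ((R * Rd) * (R * Rd))%type R) : Prop :=
  (forall A, measurable A -> g (fst @^-1` A) = mu1 A) /\
  (forall A, measurable A -> g (snd @^-1` A) = mu2 A).

Definition W2 (mu1 mu2 : probability (R * Rd)%type R) : \bar R :=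
  sqrte (ereal_inf [set (\int[g]_pq (cone_dist2 pq.1 pq.2)%:E)%E
                   | g in coupling mu1 mu2]).

Definition hproj (mu : probability (R * Rd)%type R) (nu : {measure set Rd -> \bar R})
  : Prop :=
  forall A, measurable A ->
    nu A = (\int[mu]_p (p.1 * (\1_A p.2 : R))%:E)%E.

Definition Wt2 (nu1 nu2 : {measure set Rd -> \bar R}) : \bar R :=
  ereal_inf [set w | exists (mu1 mu2 : probability (R * Rd)%type R),
    [/\ P2 mu1, hproj mu1 nu1, P2 mu2, hproj mu2 nu2 & w = W2 mu1 mu2]].

End Defs.

(* Main.v *)
Require Import Defs.
From HB Require Import structures.
From mathcomp Require Import all_boot all_order all_algebra.
From mathcomp Require Import all_classical all_reals all_analysis.
From mathcomp Require Import measurable_realfun.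
From mathcomp Require Import lra ring.
Import Order.TTheory GRing.Theory Num.Theory.
Import numFieldNormedType.Exports.
Local Open Scope classical_set_scope.
Local Open Scope ring_scope.

Section Alg.
Variables (R : realType) (d : nat).
Implicit Types u v w : 'rV[R]_d.

Lemma innerDl u v w : inner (u + v) w = inner u w + inner v w.
Proof. by rewrite /inner -big_split; apply: eq_bigr => i _; rewrite mxE mulrDl. Qed.
Lemma innerBl u v w : inner (u - v) w = inner u w - inner v w.
Proof. by rewrite /inner -sumrB; apply: eq_bigr => i _; rewrite !mxE mulrBl. Qed.
Lemma innerZl a u w : inner (a *: u) w = a * inner u w.
Proof. by rewrite /inner mulr_sumr; apply: eq_bigr => i _; rewrite mxE mulrA. Qed.
Lemma innerC u w : inner u w = inner w u.
Proof. by apply: eq_bigr => i _; rewrite mulrC. Qed.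
Lemma innerDr u v w : inner w (u + v) = inner w u + inner w v.
Proof. by rewrite !(innerC w) innerDl. Qed.
Lemma innerBr u v w : inner w (u - v) = inner w u - inner w v.
Proof. by rewrite !(innerC w) innerBl. Qed.
Lemma innerZr a u w : inner w (a *: u) = a * inner w u.
Proof. by rewrite !(innerC w) innerZl. Qed.
Lemma innerNl u w : inner (- u) w = - inner u w.
Proof. by rewrite /inner -sumrN; apply: eq_bigr => i _; rewrite !mxE mulNr. Qed.
Lemma innerNr u w : inner w (- u) = - inner w u.
Proof. by rewrite !(innerC w) innerNl. Qed.
Lemma inner_ge0 u : 0 <= inner u u.
Proof. by apply: sumr_ge0 => i _; rewrite -expr2 sqr_ge0. Qed.

Lemma key (r1 r2 c : R) (t1 t2 x : 'rV[R]_d) :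
  inner t1 t1 = 1 -> inner t2 t2 = 1 -> inner x x = 1 -> 
  2 * c * `|r1 * inner t1 x - r2 * inner t2 x| <=
    cone_dist2 (r1, t1) (r2, t2) + c ^+ 2.
Proof.
move=> h1 h2 hx.
have := inner_ge0 (r1 *: t1 - r2 *: t2 - c *: x).
have := inner_ge0 (r1 *: t1 - r2 *: t2 + c *: x).
rewrite /cone_dist2 /=.
rewrite !(innerDl, innerBl, innerNl, innerNr, innerDr, innerBr, innerZl, innerZr) ?(innerC t2 t1) ?(innerC x t1) ?(innerC x t2) ?h1 ?h2 ?hx.
move=> Ha Hb.
case: (lerP 0 (r1 * inner t1 x - r2 * inner t2 x)) => Hs.
  rewrite ger0_norm //. nra.
rewrite ltr0_norm //; nra.
Qed.

Lemma rmax_l (x y : R) : y <= x -> Num.max x y = x.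
Proof. by move=> h; rewrite /Num.max ltNge h. Qed.
Lemma rmax_r (x y : R) : x <= y -> Num.max x y = y.
Proof. by move=> h; rewrite /Num.max; case: ltgtP h => // ->. Qed.

Lemma cd2_ge0 (r1 r2 : R) (t1 t2 : 'rV[R]_d) :
  inner t1 t1 = 1 -> inner t2 t2 = 1 -> 0 <= cone_dist2 (r1, t1) (r2, t2).
Proof.
move=> h1 h2; have := inner_ge0 (r1 *: t1 - r2 *: t2).
rewrite /cone_dist2 /=.
rewrite !(innerDl, innerBl, innerNl, innerNr, innerDr, innerBr, innerZl, innerZr) ?(innerC t2 t1) ?h1 ?h2.
move=> H; nra.
Qed.

Lemma relu_le1 (t x : 'rV[R]_d) : inner t t = 1 -> inner x x = 1 ->
  relu (inner t x) <= 1.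
Proof.
move=> h1 hx; have := inner_ge0 (t - x).
rewrite !(innerDl, innerBl, innerNl, innerNr, innerDr, innerBr) ?(innerC x t) ?h1 ?hx.
move=> H; rewrite /relu; case: (lerP (inner t x) 0) => h; lra.
Qed.

Lemma relu_ge0 (a : R) : 0 <= relu a.
Proof. by rewrite /relu; case: (lerP a 0) => h //; exact: ltW. Qed.

Lemma relu_diff (r1 r2 a1 a2 : R) : 0 <= r1 -> 0 <= r2 ->
  r1 * relu a1 - r2 * relu a2 <= `|r1 * a1 - r2 * a2|.
Proof.
move=> h1 h2; rewrite /relu.
case: (lerP a1 0) => k1; case: (lerP a2 0) => k2;
case: (lerP 0 (r1 * a1 - r2 * a2)) => k;
  rewrite ?(ger0_norm k) ?(ltr0_norm k); nra.
Qed.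

Lemma pointwise (r1 r2 c : R) (t1 t2 x : 'rV[R]_d) :
  0 <= r1 -> 0 <= r2 -> 0 <= c ->
  inner t1 t1 = 1 -> inner t2 t2 = 1 -> inner x x = 1 ->
  2 * c * (Num.max r1 0 * relu (inner t1 x)) <=
  2 * c * (Num.max r2 0 * relu (inner t2 x)) + cone_dist2 (r1, t1) (r2, t2) + c ^+ 2.
Proof.
move=> p1 p2 c0 h1 h2 hx.
rewrite (rmax_l _ _ p1) (rmax_l _ _ p2).
have K := @key r1 r2 c t1 t2 x h1 h2 hx.

have D := @relu_diff r1 r2 (inner t1 x) (inner t2 x) p1 p2.
have : 2 * c * (r1 * relu (inner t1 x) - r2 * relu (inner t2 x)) <=
   2 * c * `|r1 * inner t1 x - r2 * inner t2 x|.
  by apply: ler_wpM2l => //; lra.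
lra.
Qed.
End Alg.

Section Dens.
Context (R : realType) (d1 d2 : measure_display) (T : measurableType d1) (U : measurableType d2).
Variables (mu : {measure set T -> \bar R}) (nu : {measure set U -> \bar R}).
Variables (w : T -> R) (phi : T -> U).
Hypothesis mw : measurable_fun setT w.
Hypothesis w0 : forall t, 0 <= w t.
Hypothesis mphi : measurable_fun setT phi.
Hypothesis hnu : forall A, measurable A ->
  nu A = (\int[mu]_t (w t * \1_A (phi t))%:E)%E.

Import HBNNSimple.

Lemma dens_integral (f : U -> \bar R) : measurable_fun setT f ->
  (forall u, (0 <= f u)%E) ->
  (\int[nu]_u f u = \int[mu]_t ((w t)%:E * f (phi t)))%E.
Proof.
move=> mf f0.
pose h := nnsfun_approx measurableT mf.
have hcv x : EFin \o h^~ x @ \oo --> f x.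
  exact: (cvg_nnsfun_approx measurableT mf (fun x _ => f0 x)).
have -> : (\int[nu]_u f u = limn (fun n => \int[nu]_u (EFin \o h n) u))%E.
  rewrite -monotone_convergence //.
  - by apply: eq_integral => x _; apply/esym/cvg_lim => //; exact: hcv.
  - move=> n; apply/measurable_EFinP; exact/measurable_funP.
  - by move=> n x _ /=; rewrite lee_fin.
  - by move=> x _ a b ab; rewrite lee_fin; exact/lefP/nd_nnsfun_approx.
have -> : (\int[mu]_t ((w t)%:E * f (phi t)) =
    limn (fun n => \int[mu]_t ((w t)%:E * (EFin \o h n) (phi t))))%E.
  rewrite -monotone_convergence //.
  - apply: eq_integral => x _; apply/esym/cvg_lim => //.
    by apply: cvgeZl => //; exact: hcv.
  - move=> n; apply/measurable_EFinP/measurable_funM => //.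
    exact: measurableT_comp (measurable_funP _) mphi.
  - by move=> n x _ /=; rewrite -EFinM lee_fin mulr_ge0.
  - move=> x _ a b ab; rewrite lee_wpmul2l ?lee_fin //.
    exact/lefP/nd_nnsfun_approx.
congr (limn _); apply/funext => n.
rewrite integralT_nnsfun sintegralE.
transitivity (\int[mu]_t (\sum_(y \in range (h n))
    (y%:E * (w t * \1_(h n @^-1` [set y]) (phi t))%:E)))%E; last first.
  apply: eq_integral => t _; rewrite /= fimfunE -fsumEFin //.
  rewrite ge0_mule_fsumr; last first.
    by move=> y; rewrite EFinM; exact: nnfun_muleindic_ge0.
  apply: eq_fsbigr => y _; rewrite -!EFinM; congr EFin.
  by rewrite mulrCA.
rewrite ge0_integral_fsum //; last 2 first.
  - move=> y; apply/measurable_EFinP/measurable_funM => //.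
    apply/measurable_funM => //.
    apply: measurableT_comp mphi.
    by apply/measurable_indic; rewrite -[X in measurable X]setTI; exact: measurable_funP.
  - move=> y t _; rewrite -EFinM lee_fin mulrCA mulr_ge0 //.
    by have := nnfun_muleindic_ge0 (h n) y (phi t); rewrite -EFinM lee_fin.
apply: eq_fsbigr => y yr.
have my : measurable (h n @^-1` [set y]).
  by rewrite -[X in measurable X]setTI; exact: measurable_funP.
have y0 : (0 <= y%:E)%E.
  by move: yr; rewrite inE => -[t _ <-]; rewrite lee_fin.
rewrite ge0_integralZl //.
- by rewrite hnu.
- apply/measurable_EFinP/measurable_funM => //.
  apply: measurableT_comp mphi.
  exact/measurable_indic.
- by move=> t _; rewrite lee_fin mulr_ge0.
Qed.
End Dens.
Arguments dens_integral {R d1 d2 T U mu nu w phi}.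

Section Meas.
Variables (R : realType) (d : nat).
Local Notation Rd := (Rd R d).

Lemma mcoord (i : 'I_d) : measurable_fun setT (fun th : Rd => th 0 i).
Proof.
apply: (measurability _ (measurable_realfun.RGenOpens.measurableE R)).
move=> _ [_ [a [b ->] <-]]; rewrite setTI.
apply: sub_sigma_algebra.
have := @coord_continuous R 1 d 0 i.
move/continuousP; apply; exact: interval_open.
Qed.

Lemma minner d' (T : measurableType d') (f g : T -> Rd) :
  measurable_fun setT f -> measurable_fun setT g ->
  measurable_fun setT (fun t => inner (f t) (g t)).
Proof.
move=> mf mg; apply: measurable_sum => i.
by apply: measurable_funM; apply: measurableT_comp (mcoord i) _.
Qed.

Arguments minner {d' T f g}.

Lemma musphere : measurable (@usphere R d).
Proof.
have -> : @usphere R d = (fun th : Rd => inner th th) @^-1` [set 1].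
  by [].
rewrite -[X in measurable X]setTI.
have := @minner _ Rd id id (@measurable_id _ _ _) (@measurable_id _ _ _).
by apply.

Qed.

Lemma mcone : measurable (@cone R d).
Proof.
have -> : @cone R d = (fst @^-1` `[0, +oo[) `&` (snd @^-1` (@usphere R d)).
  apply/seteqP; split => [[r t] /= [h1 h2]|[r t] /= [h1 h2]]; split => //.
    by rewrite in_itv /= andbT.
  by move: h1; rewrite /= in_itv /= andbT.
apply: measurableI.
  rewrite -[X in measurable X]setTI.
  apply: (@measurable_fst _ _ R Rd measurableT).
  exact: measurable_itv.
rewrite -[X in measurable X]setTI.
apply: (@measurable_snd _ _ R Rd measurableT).
exact: musphere.
Qed.

Local Notation P := (R * Rd)%type.

Lemma mpos_ind (A : set Rd) : measurable A ->
  measurable_fun setT (fun p : P => (Num.max p.1 0 * \1_A p.2)).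
Proof.
move=> mA; apply: measurable_funM.
  apply: measurable_maxr => //; exact: measurable_fst.
apply: measurableT_comp; first exact/measurable_indic.
exact: measurable_snd.
Qed.

Lemma hnu_pos (mu : probability P R) (nu : {measure set Rd -> \bar R}) :
  P2 mu -> hproj mu nu -> forall A, measurable A ->
  nu A = (\int[mu]_p (Num.max p.1 0 * \1_A p.2)%:E)%E.
Proof.
move=> [mc _] hp A mA; rewrite hp //.
apply: ae_eq_integral => //.
- apply/measurable_EFinP; apply: measurable_funM; first exact: measurable_fst.
  apply: measurableT_comp; first exact/measurable_indic.
  exact: measurable_snd.
- by apply/measurable_EFinP; exact: mpos_ind.
- exists (~` (@cone R d)); split => //; first exact: (measurableC (@mcone)).
  move=> [r t] /= H; apply: contra_not H => -[r0 _] _.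
  by rewrite /= in r0; rewrite rmax_l.
Qed.

Local Notation PP := (P * P)%type.

Lemma cpl1 (mu1 mu2 : probability P R) g : coupling mu1 mu2 g ->
  forall A, measurable A -> mu1 A = (\int[g]_pq (cst 1 pq * \1_A pq.1)%:E)%E.
Proof.
move=> [c1 _] A mA; rewrite -c1 //.
under eq_integral do rewrite mul1r.
have mA' : measurable (fst @^-1` A : set PP).
  by rewrite -[X in measurable X]setTI; exact: (measurable_fst measurableT).
by rewrite (integral_indic _ measurableT mA') setIT.
Qed.

Lemma cpl2 (mu1 mu2 : probability P R) g : coupling mu1 mu2 g ->
  forall A, measurable A -> mu2 A = (\int[g]_pq (cst 1 pq * \1_A pq.2)%:E)%E.
Proof.
move=> [_ c2] A mA; rewrite -c2 //.
under eq_integral do rewrite mul1r.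
have mA' : measurable (snd @^-1` A : set PP).
  by rewrite -[X in measurable X]setTI; exact: (measurable_snd measurableT).
by rewrite (integral_indic _ measurableT mA') setIT.
Qed.

Lemma cpl_neg (mu1 mu2 : probability P R) g : P2 mu1 -> P2 mu2 ->
  coupling mu1 mu2 g ->
  g.-negligible (~` [set pq : PP | cone pq.1 /\ cone pq.2]).
Proof.
move=> [m1 _] [m2 _] [c1 c2].
have mC := measurableC (@mcone).
suff H : g.-negligible ((fst @^-1` (~` (@cone R d))) `|` (snd @^-1` (~` (@cone R d)))).
  apply: negligibleS H => -[p q] /= H.
  by have [/= Hp|/= Hp] := pselect (@cone R d p); [right => Hq; apply: H|left].
apply: negligibleU.
  exists (fst @^-1` (~` (@cone R d))); split => //.
    by rewrite -[X in measurable X]setTI; exact: (measurable_fst measurableT).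
  by have := c1 _ mC; rewrite m1.
exists (snd @^-1` (~` (@cone R d))); split => //.
  by rewrite -[X in measurable X]setTI; exact: (measurable_snd measurableT).
by have := c2 _ mC; rewrite m2.
Qed.

Lemma mrelu (x : Rd) : measurable_fun setT (fun th : Rd => relu (inner th x)).
Proof.
apply: measurable_maxr => //.
by have := @minner _ Rd id (cst x) (@measurable_id _ _ _) (measurable_cst _).
Qed.

Lemma max0_ge0 (a : R) : 0 <= Num.max a 0.
Proof. by case: (lerP a 0) => h //; exact: ltW. Qed.

Lemma transfer1 (mu1 mu2 : probability P R) g (nu1 : {measure set Rd -> \bar R})
    (x : Rd) : P2 mu1 -> hproj mu1 nu1 -> coupling mu1 mu2 g ->
  (\int[nu1]_th (relu (inner th x))%:E =
   \int[g]_pq (Num.max pq.1.1 0 * relu (inner pq.1.2 x))%:E)%E.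
Proof.
move=> p2 hp cg.
have mw : measurable_fun setT (fun p : P => Num.max p.1 0).
  by apply: measurable_maxr => //; exact: measurable_fst.
rewrite (dens_integral mw (fun p => max0_ge0 p.1) (@measurable_snd _ _ _ _) (@hnu_pos mu1 nu1 p2 hp)); last 2 first.
  by apply/measurable_EFinP; exact: mrelu.
  by move=> u; rewrite lee_fin relu_ge0.
have mf : measurable_fun setT (fun p : P => (Num.max p.1 0 * relu (inner p.2 x))%:E).
  apply/measurable_EFinP; apply: measurable_funM => //.
  exact: measurableT_comp (mrelu x) (@measurable_snd _ _ _ _).
under eq_integral do rewrite -EFinM.
rewrite (dens_integral (measurable_cst (1:R)) (fun _ => ler01) (@measurable_fst _ _ _ _) (@cpl1 mu1 mu2 g cg) _ mf); last first.
  by move=> p; rewrite lee_fin mulr_ge0 // ?max0_ge0 ?relu_ge0.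
by apply: eq_integral => pq _; rewrite mul1e.
Qed.

Lemma transfer2 (mu1 mu2 : probability P R) g (nu2 : {measure set Rd -> \bar R})
    (x : Rd) : P2 mu2 -> hproj mu2 nu2 -> coupling mu1 mu2 g ->
  (\int[nu2]_th (relu (inner th x))%:E =
   \int[g]_pq (Num.max pq.2.1 0 * relu (inner pq.2.2 x))%:E)%E.
Proof.
move=> p2 hp cg.
have mw : measurable_fun setT (fun p : P => Num.max p.1 0).
  by apply: measurable_maxr => //; exact: measurable_fst.
rewrite (dens_integral mw (fun p => max0_ge0 p.1) (@measurable_snd _ _ _ _) (@hnu_pos mu2 nu2 p2 hp)); last 2 first.
  by apply/measurable_EFinP; exact: mrelu.
  by move=> u; rewrite lee_fin relu_ge0.
have mf : measurable_fun setT (fun p : P => (Num.max p.1 0 * relu (inner p.2 x))%:E).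
  apply/measurable_EFinP; apply: measurable_funM => //.
  exact: measurableT_comp (mrelu x) (@measurable_snd _ _ _ _).
under eq_integral do rewrite -EFinM.
rewrite (dens_integral (measurable_cst (1:R)) (fun _ => ler01) (@measurable_snd _ _ _ _) (@cpl2 mu1 mu2 g cg) _ mf); last first.
  by move=> p; rewrite lee_fin mulr_ge0 // ?max0_ge0 ?relu_ge0.
by apply: eq_integral => pq _; rewrite mul1e.
Qed.

Lemma gen_ineq (g : probability PP R) (G1 G2 E : PP -> R) (c a1 a2 : R) :
  measurable_fun setT G1 -> measurable_fun setT G2 -> measurable_fun setT E ->
  (forall z, 0 <= G1 z) -> (forall z, 0 <= G2 z) -> (forall z, 0 <= E z) ->
  0 <= c ->
  g.-negligible (~` [set z | 2 * c * G1 z <= 2 * c * G2 z + E z + c ^+ 2]) ->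
  (\int[g]_z (G1 z)%:E = a1%:E)%E -> (\int[g]_z (G2 z)%:E = a2%:E)%E ->
  ((2 * c * a1)%:E <= (2 * c * a2)%:E + \int[g]_z (E z)%:E + (c ^+ 2)%:E)%E.
Proof.
move=> m1 m2 mE g1 g2 e0 c0 hn i1 i2.
have c20 : 0 <= 2 * c by rewrite mulr_ge0.
have mG1 : measurable_fun setT (fun z => (G1 z)%:E) by exact/measurable_EFinP.
have mG2 : measurable_fun setT (fun z => (G2 z)%:E) by exact/measurable_EFinP.
have mEE : measurable_fun setT (fun z => (E z)%:E) by exact/measurable_EFinP.
rewrite (EFinM (2 * c) a1) -i1 -ge0_integralZl_EFin //; last by move=> z _; rewrite lee_fin.
rewrite (EFinM (2 * c) a2) -i2 -ge0_integralZl_EFin //; last by move=> z _; rewrite lee_fin.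
rewrite -(ge0_integralD _ measurableT); last 4 first.
- by move=> z _; rewrite -EFinM lee_fin mulr_ge0.
- by apply: emeasurable_funM => //; exact: measurable_cst.
- by move=> z _; rewrite lee_fin.
- exact: mEE.
have -> : ((c ^+ 2)%:E = \int[g]_z (cst (c ^+ 2)%:E z))%E.
  rewrite integral_cst // -[LHS]mule1; congr (_ * _)%E; apply/esym; exact: probability_setT.
rewrite -(ge0_integralD _ measurableT); last 4 first.
- by move=> z _; rewrite adde_ge0 // -?EFinM lee_fin ?mulr_ge0.
- apply: emeasurable_funD => //.
  by apply: emeasurable_funM => //; exact: measurable_cst.
- by move=> z _; rewrite lee_fin sqr_ge0.
- exact: measurable_cst.
apply: ae_ge0_le_integral => //.
- by move=> z _; rewrite -EFinM lee_fin mulr_ge0.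
- by apply: emeasurable_funM => //; exact: measurable_cst.
- by move=> z _; rewrite adde_ge0 ?adde_ge0 // -?EFinM lee_fin ?mulr_ge0 ?sqr_ge0.
- apply: emeasurable_funD; last exact: measurable_cst.
  apply: emeasurable_funD => //.
  by apply: emeasurable_funM => //; exact: measurable_cst.
apply: negligibleS hn => z /= H; apply: contra_not H => H _.
by rewrite -!EFinM -!EFinD lee_fin.
Qed.

Lemma cd2C (p q : P) : cone_dist2 p q = cone_dist2 q p.
Proof.
rewrite /cone_dist2 (@innerC R d p.2 q.2).
have -> : (p.1 - q.1) ^+ 2 = (q.1 - p.1) ^+ 2 by rewrite -sqrrN opprB.
by ring.
Qed.

Lemma m11 : measurable_fun setT (fun z : PP => z.1.1).
Proof. exact: measurableT_comp (@measurable_fst _ _ _ _) (@measurable_fst _ _ _ _). Qed.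
Lemma m12 : measurable_fun setT (fun z : PP => z.1.2).
Proof. exact: measurableT_comp (@measurable_snd _ _ _ _) (@measurable_fst _ _ _ _). Qed.
Lemma m21 : measurable_fun setT (fun z : PP => z.2.1).
Proof. exact: measurableT_comp (@measurable_fst _ _ _ _) (@measurable_snd _ _ _ _). Qed.
Lemma m22 : measurable_fun setT (fun z : PP => z.2.2).
Proof. exact: measurableT_comp (@measurable_snd _ _ _ _) (@measurable_snd _ _ _ _). Qed.

Lemma mcd2 : measurable_fun setT (fun z : PP => cone_dist2 z.1 z.2).
Proof.
rewrite /cone_dist2; apply: measurable_funD.
  by apply: measurable_funX; apply: measurable_funB; [exact: m11|exact: m21].
apply: measurable_funM; last first.
  apply: measurable_funB => //; by have := minner m12 m22.
apply: measurable_funM; last exact: m21.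
by apply: measurable_funM => //; exact: m11.
Qed.

Lemma mG1 x : measurable_fun setT (fun z : PP => Num.max z.1.1 0 * relu (inner z.1.2 x)).
Proof.
apply: measurable_funM; first by apply: measurable_maxr => //; exact: m11.
exact: measurableT_comp (mrelu x) m12.
Qed.
Lemma mG2 x : measurable_fun setT (fun z : PP => Num.max z.2.1 0 * relu (inner z.2.2 x)).
Proof.
apply: measurable_funM; first by apply: measurable_maxr => //; exact: m21.
exact: measurableT_comp (mrelu x) m22.
Qed.

Lemma per_coupling (mu1 mu2 : probability P R) g (nu1 nu2 : {measure set Rd -> \bar R})
    (x : Rd) (a1 a2 : R) : usphere x ->
  P2 mu1 -> P2 mu2 -> hproj mu1 nu1 -> hproj mu2 nu2 -> coupling mu1 mu2 g ->
  (\int[nu1]_th (relu (inner th x))%:E = a1%:E)%E ->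
  (\int[nu2]_th (relu (inner th x))%:E = a2%:E)%E ->
  (((a1 - a2) ^+ 2)%:E <= \int[g]_z (cone_dist2 z.1 z.2)%:E)%E.
Proof.
move=> hx p1 p2 h1 h2 cg i1 i2.
rewrite (@transfer1 mu1 mu2 g nu1 x p1 h1 cg) in i1.
rewrite (@transfer2 mu1 mu2 g nu2 x p2 h2 cg) in i2.
have hn := @cpl_neg mu1 mu2 g p1 p2 cg.
pose E := fun z : PP => Num.max (cone_dist2 z.1 z.2) 0.
have mE : measurable_fun setT E by apply: measurable_maxr => //; exact: mcd2.
have -> : (\int[g]_z (cone_dist2 z.1 z.2)%:E = \int[g]_z (E z)%:E)%E.
  apply: ae_eq_integral => //.
  - by apply/measurable_EFinP; exact: mcd2.
  - by apply/measurable_EFinP.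
  apply: negligibleS hn => -[[r1 t1] [r2 t2]] /= H; apply: contra_not H.
  move=> [[r10 s1] [r20 s2]] _; rewrite /E rmax_l //.
  exact: cd2_ge0.
have I0 : (0 <= \int[g]_z (E z)%:E)%E.
  by apply: integral_ge0 => z _; rewrite lee_fin max0_ge0.
have key2 : forall cc b1 b2, ((2 * cc * b1)%:E <= (2 * cc * b2)%:E + \int[g]_z (E z)%:E + (cc ^+ 2)%:E)%E ->
    cc = b1 - b2 -> ((cc ^+ 2)%:E <= \int[g]_z (E z)%:E)%E.
  move=> cc b1 b2; move: I0; case: (\int[g]_z (E z)%:E)%E => [e| |] //=.
  - by rewrite -!EFinD !lee_fin => _ H Hc; rewrite Hc in H *; nra.
  - by move=> *; rewrite leey.
have ha : forall (t : Rd), usphere t -> inner t t = 1 by [].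
case: (lerP a2 a1) => ha12.
  apply: (key2 (a1 - a2) a1 a2) => //.
  apply: (@gen_ineq g _ _ E (a1 - a2) a1 a2 (mG1 x) (mG2 x) mE) => //.
  - by move=> z; rewrite mulr_ge0 ?max0_ge0 ?relu_ge0.
  - by move=> z; rewrite mulr_ge0 ?max0_ge0 ?relu_ge0.
  - by move=> z; rewrite max0_ge0.
  - by rewrite subr_ge0.
  apply: negligibleS hn => -[[r1 t1] [r2 t2]] /= H; apply: contra_not H.
  move=> [[r10 s1] [r20 s2]]; rewrite /E /= (@rmax_l R (cone_dist2 _ _) 0); last exact: cd2_ge0.
  apply: pointwise => //; rewrite subr_ge0 //.
rewrite -sqrrN opprB.
apply: (key2 (a2 - a1) a2 a1) => //.
apply: (@gen_ineq g _ _ E (a2 - a1) a2 a1 (mG2 x) (mG1 x) mE) => //.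
- by move=> z; rewrite mulr_ge0 ?max0_ge0 ?relu_ge0.
- by move=> z; rewrite mulr_ge0 ?max0_ge0 ?relu_ge0.
- by move=> z; rewrite max0_ge0.
- by rewrite subr_ge0 ltW.
apply: negligibleS hn => -[[r1 t1] [r2 t2]] /= H; apply: contra_not H.
move=> [[r10 s1] [r20 s2]]; rewrite /E /= (@rmax_l R (cone_dist2 _ _) 0); last exact: cd2_ge0.
rewrite cd2C /=.
apply: pointwise => //; rewrite subr_ge0 ltW //.
Qed.

Lemma bound (nu1 nu2 : {measure set Rd -> \bar R}) (x : Rd) (a1 a2 : R) :
  usphere x ->
  (\int[nu1]_th (relu (inner th x))%:E = a1%:E)%E ->
  (\int[nu2]_th (relu (inner th x))%:E = a2%:E)%E ->
  ((`|a1 - a2|)%:E <= Wt2 nu1 nu2)%E.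
Proof.
move=> hx i1 i2; apply: le_ereal_inf_tmp => _ [mu1 [mu2 [p1 h1 p2 h2 ->]]].
rewrite /W2.
set S := ereal_inf _.
have HS : (((a1 - a2) ^+ 2)%:E <= S)%E.
  apply: le_ereal_inf_tmp => _ [g cg <-].
  exact: (@per_coupling mu1 mu2 g nu1 nu2 x a1 a2 hx p1 p2 h1 h2 cg i1 i2).
have -> : ((`|a1 - a2|)%:E = sqrte ((a1 - a2) ^+ 2)%:E)%E.
  by rewrite /sqrte sqrtr_sqr.
rewrite lee_sqrt //.
by apply: le_trans HS; rewrite lee_fin sqr_ge0.
Qed.

Lemma jordan_fin (nu : {charge set Rd -> \bar R}) nup num :
  is_jordan_decomp nu nup num -> (nup setT < +oo)%E /\ (num setT < +oo)%E.
Proof.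
move=> [hj _].
have F : nu setT \is a fin_num by apply: fin_num_measure.
rewrite hj // in F; move: F.
have a0 := measure_ge0 nup setT; have b0 := measure_ge0 num setT.
move: a0 b0; case: (nup setT) => [a| |] //; case: (num setT) => [b| |] //=.
by move=> _ _ _; split; rewrite ltey.
Qed.

Lemma fin_int (mu1 : probability P R) (nu1 : {measure set Rd -> \bar R}) (x : Rd) :
  usphere x -> P2 mu1 -> hproj mu1 nu1 -> (nu1 setT < +oo)%E ->
  (\int[nu1]_th (relu (inner th x))%:E)%E \is a fin_num.
Proof.
move=> hx p1 h1 fin.
have mw : measurable_fun setT (fun p : P => Num.max p.1 0).
  by apply: measurable_maxr => //; exact: measurable_fst.
have hn := @hnu_pos mu1 nu1 p1 h1.
rewrite ge0_fin_numE; last by apply: integral_ge0 => t _; rewrite lee_fin relu_ge0.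
apply: le_lt_trans fin.
rewrite (dens_integral mw (fun p => max0_ge0 p.1) (@measurable_snd _ _ _ _) hn); last 2 first.
  by apply/measurable_EFinP; exact: mrelu.
  by move=> u; rewrite lee_fin relu_ge0.
rewrite (hn _ measurableT).
apply: ae_ge0_le_integral => //.
- by move=> p _; rewrite -EFinM lee_fin mulr_ge0 ?max0_ge0 ?relu_ge0.
- apply: emeasurable_funM; first exact/measurable_EFinP.
  apply/measurable_EFinP; exact: measurableT_comp (mrelu x) (@measurable_snd _ _ _ _).
- by move=> p _; rewrite lee_fin mulr_ge0 ?max0_ge0.
- by apply/measurable_EFinP; exact: mpos_ind.
case: p1 => mc _.
exists (~` (@cone R d)); split => //; first exact: (measurableC (@mcone)).
move=> [r t] /= H; apply: contra_not H => -[r0 st] _.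
rewrite -EFinM lee_fin indicT mulr1 -[leRHS]mulr1 ler_wpM2l ?max0_ge0 //.
exact: relu_le1.
Qed.

Lemma wt2_ex (nu1 nu2 : {measure set Rd -> \bar R}) : (Wt2 nu1 nu2 < +oo)%E ->
  exists mu1 mu2 : probability P R,
    [/\ P2 mu1, hproj mu1 nu1, P2 mu2 & hproj mu2 nu2].
Proof.
move=> H; apply: contrapT => N; move: H; rewrite /Wt2.
have -> : [set w | exists mu1 mu2 : probability P R,
    [/\ P2 mu1, hproj mu1 nu1, P2 mu2, hproj mu2 nu2 & w = W2 mu1 mu2]] = set0.
  apply/seteqP; split => // w [mu1 [mu2 [q1 q2 q3 q4 _]]].
  by apply: N; exists mu1, mu2.
by rewrite ereal_inf0 ltxx.
Qed.
End Meas.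
Arguments jordan_fin {R d nu nup num}.
Arguments fin_int {R d mu1 nu1}.
Arguments bound {R d nu1 nu2 x a1 a2}.
Arguments wt2_ex {R d nu1 nu2}.

Theorem mainTheorem13 (R : realType) (d : nat)
  (nu nu' : {charge set Rd R d -> \bar R})
  (nup num nup' num' : {measure set Rd R d -> \bar R}) :
  charge_on_sphere nu -> charge_on_sphere nu' ->
  is_jordan_decomp nu nup num -> is_jordan_decomp nu' nup' num' ->
  (ereal_sup [set `|fnet x nup num - fnet x nup' num'|%E
             | x in @usphere R d]
   <= (2 * Num.sqrt 2)%:E * maxe (Wt2 nup nup') (Wt2 num num'))%E.
Proof.
move=> _ _ jp jm.
have [fp fm] := jordan_fin jp; have [fp' fm'] := jordan_fin jm.
have c0 : 0 < 2 * Num.sqrt 2 :> R by rewrite mulr_gt0 // sqrtr_gt0.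
set W := maxe _ _.
have [Woo|Wfin] := eqVneq W +oo%E.
  by rewrite Woo mulry gtr0_sg // mul1e leey.
have Wlt : (W < +oo)%E by rewrite ltey.
have Wp : (Wt2 nup nup' < +oo)%E by apply: le_lt_trans Wlt; rewrite /W le_max lexx.
have Wm : (Wt2 num num' < +oo)%E by apply: le_lt_trans Wlt; rewrite /W le_max lexx orbT.
have [mu1 [mu2 [p1 h1 p2 h2]]] := wt2_ex Wp.
have [mu3 [mu4 [p3 h3 p4 h4]]] := wt2_ex Wm.
apply: ge_ereal_sup => _ [x hx <-].
have fA := fin_int x hx p1 h1 fp.
have fA' := fin_int x hx p2 h2 fp'.
have fB := fin_int x hx p3 h3 fm.
have fB' := fin_int x hx p4 h4 fm'.
rewrite /fnet -(fineK fA) -(fineK fA') -(fineK fB) -(fineK fB').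
have ba := bound hx (esym (fineK fA)) (esym (fineK fA')).
have bb := bound hx (esym (fineK fB)) (esym (fineK fB')).
rewrite -!EFinB /=.
have tri (p q p' q' : R) : `|(p - q) - (p' - q')| <= `|p - p'| + `|q - q'|.
  have -> : (p - q) - (p' - q') = (p - p') - (q - q') by ring.
  exact: ler_normB.
set A := fine (\int[nup]_th (relu (inner th x))%:E)%E in ba *.
set A' := fine (\int[nup']_th (relu (inner th x))%:E)%E in ba *.
set B := fine (\int[num]_th (relu (inner th x))%:E)%E in bb *.
set B' := fine (\int[num']_th (relu (inner th x))%:E)%E in bb *.
apply: (@le_trans _ _ ((`|A - A'| + `|B - B'|)%:E)); first by rewrite lee_fin; exact: tri.
rewrite EFinD.
have Wp' : (Wt2 nup nup' <= W)%E by rewrite /W le_max lexx.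
have Wm' : (Wt2 num num' <= W)%E by rewrite /W le_max lexx orbT.
have W0 : (0 <= W)%E by apply: le_trans Wp'; apply: le_trans ba; rewrite lee_fin.
apply: le_trans (leeD (le_trans ba Wp') (le_trans bb Wm')) _.
move: W0 Wlt; clear Wfin Wp Wm Wp' Wm'; clearbody W; case: W => [w| |] // w0 _.
rewrite -EFinD -EFinM lee_fin.
have s1 : 1 <= Num.sqrt 2 :> R.
  rewrite -[X in X <= _]sqrtr1 ler_sqrt; lra.
rewrite lee_fin in w0; nra.
Qed.
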